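(* Let $p$ be a prime and let $n=p^{\beta}(pq+r)$ with $\beta,q,r\in\mathbb{N}$ and $\{-q\}_{p-1}<r<p$. Then $$\operatorname{ord}_p(n!)=\Big\lfloor\frac{n-1}{p-1}\Big\rfloor\iff q=0.$$
   Context: $\{a\}_{m}$ denotes the least nonnegative residue of the integer $a$ modulo the positive integer $m$. $\operatorname{ord}_p$ is the $p$-adic order. *)

(* Defs.v *)
From mathcomp Require Import all_boot all_order all_algebra.
Set Implicit Arguments. Unset Strict Implicit. Unset Printing Implicit Defensive.
Import GRing.Theory Num.Theory.

(* {a}_m : the least nonnegative residue of the integer a modulo the positive
   integer m (intdiv's modz is the least nonnegative residue for m <> 0). *)
Definition lnres (a : int) (m : nat) : nat := `|(a %% (m%:Z))%Z|%N.

(* Main.v *)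
Require Import Defs.
From mathcomp Require Import all_boot all_order all_algebra.
From mathcomp Require Import zify ring.

Lemma logn_fact_gen p n N : prime p -> n <= N ->
  logn p n`! = \sum_(1 <= k < N.+1) n %/ p ^ k.
Proof.
move=> pp nN; rewrite logn_fact //.
rewrite [RHS](@big_cat_nat _ _ _ n.+1) /=; [|lia|lia].
rewrite (_ : \sum_(n.+1 <= k < N.+1) n %/ p ^ k = 0) ?addn0 //.
rewrite big_nat_cond big1 // => k /andP[/andP[Hk _] _].
apply: divn_small; apply: leq_trans Hk _.
exact: ltnW (ltn_expl _ (prime_gt1 pp)).
Qed.

Lemma L_step p m r : prime p -> r < p ->
  logn p (p * m + r)`! = m + logn p m`!.
Proof.
move=> pp rp; have p0 := prime_gt0 pp.
rewrite (@logn_fact_gen p _ (p * m + r).+1) // big_ltn //.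
rewrite expn1 mulnC divnMDl // divn_small // addn0; congr (_ + _).
rewrite big_add1 /= (@logn_fact_gen p m (p * m + r)) //; last first.
  by rewrite mulnC; apply: leq_trans (leq_pmulr _ p0) (leq_addr _ _).
rewrite [p * m]mulnC; apply: eq_bigr => k _.
by rewrite expnS divnMA divnMDl // (divn_small rp) addn0.
Qed.

Lemma L_bound p m : prime p -> (p - 1) * logn p m`! <= m.
Proof.
move=> pp; have p1 := prime_gt1 pp.
elim: m {-2}m (leqnn m) => [|N IH] m Hm.
  by move: Hm; rewrite leqn0 => /eqP ->; rewrite logn1 muln0.
have Hd : m = p * (m %/ p) + m %% p by rewrite mulnC -divn_eq.
rewrite {1}Hd L_step ?ltn_mod ?prime_gt0 //.
case: (posnP m) => [->|m0]; first by rewrite div0n logn1; lia.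
have Hlt : m %/ p <= N.
  have : m %/ p < m by apply: ltn_Pdiv.
  lia.
have := IH _ Hlt.
move: Hd; set a := m %/ p; set b := m %% p; set l := logn p a`!.
nia.
Qed.

Lemma s_pos p m : prime p -> 0 < m -> (p - 1) * logn p m`! < m.
Proof.
move=> pp; have p1 := prime_gt1 pp.
elim: m {-2}m (leqnn m) => [|N IH] m Hm m0; first lia.
have Hd : m = p * (m %/ p) + m %% p by rewrite mulnC -divn_eq.
rewrite {1}Hd L_step ?ltn_mod ?prime_gt0 //.
have Hlt : m %/ p <= N.
  have : m %/ p < m by apply: ltn_Pdiv.
  lia.
case: (posnP (m %/ p)) => [a0|a0].
  rewrite a0 logn1 muln0; move: Hd; rewrite a0; lia.
have := IH _ Hlt a0.
move: Hd; set a := m %/ p; set b := m %% p; set l := logn p a`!.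
nia.
Qed.

Lemma L_pow p b m : prime p ->
  p ^ b * m = (p-1) * logn p (p ^ b * m)`! + (m - (p-1) * logn p m`!).
Proof.
move=> pp; have p1 := prime_gt1 pp; have hb := @L_bound p m pp.
elim: b => [|b IH]; first by rewrite expn0 mul1n; lia.
rewrite expnS -mulnA.
have := @L_step p (p ^ b * m) 0 pp (prime_gt0 pp); rewrite addn0 => ->.
move: IH; set X := p ^ b * m; set LX := logn p X`!; set s := m - _.
nia.
Qed.

Lemma mod_comp (m q L s : nat) : q = m * L + s -> 0 < s -> s < m ->
  `|((- (q%:Z)) %% (m%:Z))%Z|%N = m - s.
Proof.
move=> Hq s0 sm.
have HE : (- (q%:Z) = (- (L.+1)%:Z) * (m%:Z) + (m - s)%:Z)%R.
  rewrite Hq PoszD PoszM -subzn ?(ltnW sm) // -addn1 PoszD; ring.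
rewrite HE modzMDl modz_small // ltz_nat le0z_nat /=; lia.
Qed.

Theorem lemma4p1 (p beta q r n : nat) :
  prime p ->
  n = p ^ beta * (p * q + r) ->
  lnres (- (q%:Z))%R p.-1 < r < p ->
  (logn p n`! = (n - 1) %/ (p - 1)) <-> q = 0.
Proof.
move=> pp Hn /andP[Hlr rp].
have p1 := prime_gt1 pp.
have r0 : 0 < r by apply: leq_ltn_trans (leq0n _) Hlr.
have Hpow := @L_pow p beta (p * q + r) pp.
rewrite L_step // in Hpow.
have Hbq := @L_bound p q pp.
rewrite -Hn in Hpow.
move: Hpow Hbq Hlr; set Ln := logn p n`!; set Lq := logn p q`!.
move=> Hpow Hbq Hlr.
set S := q - (p-1) * Lq + r.
have E : p * q + r - (p - 1) * (q + Lq) = S.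
  rewrite /S; clear -Hbq p1; nia.
rewrite E in Hpow.
have HS0 : 0 < S by rewrite /S; clear -r0; lia.
have Hdiv : (n - 1) %/ (p - 1) = Ln + (S - 1) %/ (p - 1).
  rewrite (_ : n - 1 = Ln * (p - 1) + (S - 1)); last first.
    rewrite Hpow (mulnC Ln); by rewrite addnBA.
  by rewrite divnMDl //; clear -p1; lia.
rewrite Hdiv; split.
- move=> H.
  have H0 : (S - 1) %/ (p - 1) = 0 by clear -H; lia.
  have HS : S - 1 < p - 1.
    case: (ltnP (S - 1) (p - 1)) => // H1.
    by move: H1; rewrite -divn_gt0 ?H0 //; clear -p1; lia.
  case: (posnP q) => [//|q0].
  have sq := @s_pos p q pp q0.
  have Hq : q = p.-1 * Lq + (q - (p-1) * Lq) by clear -Hbq; lia.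
  have H' := @mod_comp p.-1 q Lq (q - (p-1) * Lq) Hq.
  rewrite /lnres H' in Hlr; last 2 first.
  + clear -sq; lia.
  + move: HS; rewrite /S; clear -r0 p1; lia.
  move: HS Hlr; rewrite /S; clear -r0 p1 sq; lia.
- move=> q0; rewrite divn_small ?addn0 //.
  move: HS0; rewrite /S /Lq q0 logn1; clear -rp; lia.
Qed.
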